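(* For every cubic graph $G$, $\nu_3(G) \geq \frac{7}{6}\cdot |V(G)|$.
   Context: Graphs are finite, without loops, possibly with multiple edges; a graph is cubic if every vertex has degree $3$. For $k\geq 1$, $\nu_k(G)$ is the maximum number of edges of a $k$-edge-colorable subgraph of $G$. *)

(* Defs.v *)
From mathcomp Require Import all_boot.
Set Implicit Arguments. Unset Strict Implicit. Unset Printing Implicit Defensive.

(* A finite multigraph: vertex type V, edge type E, each edge e has two
   endpoints src e and dst e.  Parallel edges are allowed (E is arbitrary). *)
Section Multigraph.
Variables (V E : finType) (src dst : E -> V).

Definition loopless : Prop := forall e : E, src e != dst e.

Definition incident (e : E) (v : V) : bool := (src e == v) || (dst e == v).

(* degree of v = number of edges incident to v (each edge counts once,
   as there are no loops) *)
Definition deg (v : V) : nat := #|[set e : E | incident e v]|.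

Definition cubic : Prop := forall v : V, deg v = 3.

Definition adjacent_edges (e f : E) : bool := [exists v : V, incident e v && incident f v].

Definition k_edge_colorable (k : nat) (F : {set E}) : bool :=
  [exists c : {ffun E -> 'I_k},
    [forall e in F, forall f in F,
       ((e != f) && adjacent_edges e f) ==> (c e != c f)]].

Definition nu (k : nat) : nat :=
  \max_(F : {set E} | k_edge_colorable k F) #|F|.

End Multigraph.

(* Main.v *)
Require Import Defs.
From mathcomp Require Import all_boot.
From mathcomp Require Import zify.
Set Implicit Arguments. Unset Strict Implicit. Unset Printing Implicit Defensive.

Section Proof.
Variables (V E : finType) (src dst : E -> V).
Hypothesis Hloop : loopless src dst.
Hypothesis Hcub : cubic src dst.

Implicit Types (F G : {set E}) (c : {ffun E -> 'I_3}) (s t : 'I_3) (e f g h : E) (v w : V).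

Local Notation inc := (incident src dst).
Local Notation adj := (adjacent_edges src dst).

Definition proper (F : {set E}) (c : {ffun E -> 'I_3}) : Prop :=
  forall e f, e \in F -> f \in F -> e != f -> adj e f -> c e != c f.

Lemma colorableP F : k_edge_colorable src dst 3 F <-> exists c, proper F c.
Proof.
split.
- case/existsP=> c /forallP H; exists c => e f eF fF nef aef.
  have := H e; rewrite eF /= => /forallP /(_ f); rewrite fF /=.
  by rewrite nef aef.
- case=> c H; apply/existsP; exists c; apply/forallP=> e; apply/implyP=> eF.
  apply/forallP=> f; apply/implyP=> fF; apply/implyP=> /andP[nef aef].
  exact: H.
Qed.

Definition present (F : {set E}) (c : {ffun E -> 'I_3}) v s :=
  [exists e, [&& e \in F, inc e v & c e == s]].

Definition optimal (F : {set E}) (c : {ffun E -> 'I_3}) :=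
  proper F c /\ forall F', k_edge_colorable src dst 3 F' -> #|F'| <= #|F|.

Lemma incE e v : inc e v = (src e == v) || (dst e == v).
Proof. by []. Qed.

Lemma adjP e f : reflect (exists v, inc e v /\ inc f v) (adj e f).
Proof.
apply: (iffP existsP) => [[v /andP[]]|[v []]]; first by exists v.
by move=> *; exists v; apply/andP.
Qed.

Lemma adj_sym e f : adj e f = adj f e.
Proof. by apply/adjP/adjP=> -[v [] *]; exists v. Qed.

Lemma inc_adj e f v : inc e v -> inc f v -> adj e f.
Proof. by move=> *; apply/adjP; exists v. Qed.

Lemma proper_sub (F G : {set E}) c : G \subset F -> proper F c -> proper G c.
Proof. by move=> /subsetP sGF H e f eG fG; apply: H; apply: sGF. Qed.

Lemma deg4 v e1 e2 e3 e4 : inc e1 v -> inc e2 v -> inc e3 v -> inc e4 v ->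
  e1 != e2 -> e1 != e3 -> e1 != e4 -> e2 != e3 -> e2 != e4 -> e3 != e4 -> False.
Proof.
move=> i1 i2 i3 i4 n12 n13 n14 n23 n24 n34.
have u : uniq [:: e1; e2; e3; e4] by rewrite /= !inE !negb_or n12 n13 n14 n23 n24 n34.
have := Hcub v; rewrite /deg => H.
have : #|[:: e1; e2; e3; e4]| <= #|[set e | inc e v]|.
  by apply: subset_leq_card; apply/subsetP=> e; rewrite !inE => /or4P[]/eqP->.
by rewrite H (card_uniqP u).
Qed.

Definition oth e v := if src e == v then dst e else src e.

Lemma oth_inc e v : inc e (oth e v).
Proof. by rewrite /oth incE; case: ifP; rewrite eqxx ?orbT. Qed.

Lemma oth_oth e v : inc e v -> oth e (oth e v) = v.
Proof.
rewrite incE /oth; case: (eqVneq (src e) v) => [<-|ne] /=.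
  by rewrite (negbTE (Hloop e)).
by move/eqP=> <-; rewrite eqxx.
Qed.

Lemma oth_neq e v : inc e v -> oth e v != v.
Proof.
rewrite incE /oth; case: (eqVneq (src e) v) => [<-|ne] _ //=.
by rewrite eq_sym; apply: Hloop.
Qed.

Lemma inc_cases e v : inc e v -> (src e = v /\ dst e = oth e v) \/ (dst e = v /\ src e = oth e v).
Proof.
rewrite incE /oth; case: (eqVneq (src e) v) => [->|ne] /=; first by left.
by move/eqP=> <-; right.
Qed.

Lemma uniq_col F c e f v : proper F c -> e \in F -> f \in F -> inc e v -> inc f v ->
  c e = c f -> e = f.
Proof.
move=> Hp eF fF ie iF ce; apply/eqP/negPn/negP => nef.
by have := Hp e f eF fF nef (inc_adj ie iF); rewrite ce eqxx.
Qed.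


Lemma neq_col (c : {ffun E -> 'I_3}) e f : c e != c f -> e != f.
Proof. by apply: contra => /eqP->. Qed.

Lemma neq_in (F : {set E}) e f : e \in F -> f \notin F -> e != f.
Proof. by move=> eF; apply: contra => /eqP<-. Qed.

Lemma add_proper F c g s : proper F c -> g \notin F ->
  (forall e, e \in F -> adj g e -> c e != s) ->
  proper (g |: F) [ffun e => if e == g then s else c e].
Proof.
move=> Hp gF H e f; rewrite !inE => /predU1P[->|eF] /predU1P[->|fF];
  rewrite ?eqxx // !ffunE ?eqxx.
- move=> _ a; rewrite (negbTE (neq_in fF gF)) eq_sym; exact: H.
- move=> _ a; rewrite (negbTE (neq_in eF gF)); apply: H => //; by rewrite adj_sym.
- by move=> nef a; rewrite (negbTE (neq_in eF gF)) (negbTE (neq_in fF gF)); apply: Hp.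
Qed.

Definition c0 : 'I_3 := @Ordinal 3 0 isT.
Definition c1 : 'I_3 := @Ordinal 3 1 isT.
Definition c2 : 'I_3 := @Ordinal 3 2 isT.

Lemma miss_exists F c g v : g \notin F -> inc g v -> exists s, ~~ present F c v s.
Proof.
move=> gF gv.
case: (pickP (fun s => ~~ present F c v s)) => [s Hs|H]; first by exists s.
have P s : present F c v s by have := H s; rewrite /= => /negbFE.
case/existsP: (P c0) => f0 /and3P[f0F i0 /eqP k0].
case/existsP: (P c1) => f1 /and3P[f1F i1 /eqP k1].
case/existsP: (P c2) => f2 /and3P[f2F i2 /eqP k2].
exfalso; apply: (deg4 i0 i1 i2 gv); rewrite ?(neq_in _ gF) //; apply: (@neq_col c);
  by rewrite ?k0 ?k1 ?k2.
Qed.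

Lemma opt_add F c g s : optimal F c -> g \notin F ->
  ~~ present F c (src g) s -> ~~ present F c (dst g) s -> False.
Proof.
move=> [Hp Ho] gF ns nd.
have : k_edge_colorable src dst 3 (g |: F).
  apply/colorableP; exists [ffun e => if e == g then s else c e].
  apply: add_proper => // e eF /adjP [v [gv ev]]; apply/negP => /eqP ces.
  move: gv; rewrite incE => /orP[] /eqP vE.
  - by move/negP: ns; apply; apply/existsP; exists e; rewrite eF vE ev ces eqxx.
  - by move/negP: nd; apply; apply/existsP; exists e; rewrite eF vE ev ces eqxx.
by move/Ho; rewrite cardsU1 gF add1n ltnn.
Qed.

Lemma opt_add' F c g v s : optimal F c -> g \notin F -> inc g v ->
  ~~ present F c v s -> ~~ present F c (oth g v) s -> False.
Proof.
move=> Ho gF gv n1 n2; case: (inc_cases gv) => -[e1 e2].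
- by apply: (opt_add Ho gF (s := s)); rewrite ?e1 ?e2.
- by apply: (opt_add Ho gF (s := s)); rewrite ?e1 ?e2.
Qed.

Lemma one_color F c v g1 g2 s t : g1 \notin F -> g2 \notin F -> g1 != g2 ->
  inc g1 v -> inc g2 v -> present F c v s -> present F c v t -> s = t.
Proof.
move=> g1F g2F n12 i1 i2 /existsP[f1 /and3P[f1F j1 /eqP k1]]
  /existsP[f2 /and3P[f2F j2 /eqP k2]].
apply/eqP/negPn/negP => nst.
apply: (deg4 i1 i2 j1 j2 n12).
- by rewrite eq_sym (neq_in f1F g1F).
- by rewrite eq_sym (neq_in f2F g1F).
- by rewrite eq_sym (neq_in f1F g2F).
- by rewrite eq_sym (neq_in f2F g2F).
- by apply: (@neq_col c); rewrite k1 k2.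
Qed.


Section Kempe.
Variables (F : {set E}) (c : {ffun E -> 'I_3}) (a x : 'I_3).
Hypothesis Hp : proper F c.
Hypothesis Hax : a != x.

Definition sig s v :=
  if [pick e | [&& e \in F, inc e v & c e == s]] is Some e then oth e v else v.

Lemma sig_edge s v e : e \in F -> inc e v -> c e = s -> sig s v = oth e v.
Proof.
move=> eF ev ce; rewrite /sig; case: pickP => [f /and3P[fF fv /eqP cf]|H].
  by rewrite (uniq_col Hp fF eF fv ev) // cf ce.
by have := H e; rewrite eF ev ce eqxx.
Qed.

Lemma sig_none s v : ~~ present F c v s -> sig s v = v.
Proof.
move=> np; rewrite /sig; case: pickP => [f Hf|//].
by move/negP: np; case; apply/existsP; exists f.
Qed.

Lemma sig_inv s v : sig s (sig s v) = v.
Proof.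
case: (boolP (present F c v s)) => [/existsP[e /and3P[eF ev /eqP ce]]|np].
  rewrite (sig_edge eF ev ce) (sig_edge eF (oth_inc e v) ce); exact: oth_oth.
by rewrite !sig_none.
Qed.

Definition col (b : bool) := if b then a else x.
Definition hh (p : V * bool) := (sig (col p.2) p.1, p.2).
Definition kk (p : V * bool) := (p.1, ~~ p.2).
Definition ff p := kk (hh p).

Lemma hhK : involutive hh. Proof. by case=> v b; rewrite /hh /= sig_inv. Qed.
Lemma kkK : involutive kk. Proof. by case=> v b; rewrite /kk /= negbK. Qed.
Lemma ff_inj : injective ff.
Proof. apply: inj_comp; apply: inv_inj; [exact: kkK|exact: hhK]. Qed.
Lemma fhf p : ff (hh (ff p)) = hh p. Proof. by rewrite /ff hhK kkK. Qed.
Lemma iter_fh i z : iter i ff (hh (iter i ff z)) = hh z.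
Proof.
elim: i => [|i IH] //.
by rewrite iterSr -[iter i.+1 ff z]/(ff (iter i ff z)) fhf.
Qed.

Section Orbit.
Variable z : V * bool.
Hypothesis Hz : hh z = z.

Lemma O_hh y : fconnect ff z y -> fconnect ff z (hh y).
Proof.
move=> zy; rewrite fconnect_sym; last exact: ff_inj.
have := iter_fh (findex ff z y) z; rewrite iter_findex // Hz => E'.
by rewrite -E'; apply: fconnect_iter.
Qed.

Lemma O_kk y : fconnect ff z y -> fconnect ff z (kk y).
Proof.
move=> zy; have -> : kk y = ff (hh y) by rewrite /ff hhK.
exact: connect_trans (O_hh zy) (fconnect1 _ _).
Qed.

Lemma idx_half y : fconnect ff z y -> hh y = y ->
  findex ff z y = 0 \/ findex ff z y + findex ff z y = order ff z.
Proof.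
move=> zy hy; set i := findex ff z y; set N := order ff z.
have iN : i < N := findex_max zy.
have yi : iter i ff z = y := iter_findex zy.
have e2 : iter (i + i) ff z = z.
  by rewrite iterD yi -{1}hy -yi iter_fh Hz.
case: (ltnP (i + i) N) => h.
  left; have := findex_iter h; rewrite e2 findex0 => /eqP.
  by rewrite eq_sym addn_eq0 => /andP[/eqP].
right.
have h2 : i + i - N < N.
  by lia.
have e3 : iter (i + i) ff z = iter (i + i - N) ff z.
  by rewrite -{1}(subnK h) iterD iter_order //; exact: ff_inj.
move: e3; rewrite e2 => e3.
have := findex_iter h2; rewrite -e3 findex0 => /eqP.
rewrite eq_sym subn_eq0 => H; apply/eqP; rewrite eqn_leq H h.
by [].
Qed.

Lemma ends2 y1 y2 : fconnect ff z y1 -> fconnect ff z y2 ->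
  hh y1 = y1 -> hh y2 = y2 -> [\/ y1 = z, y2 = z | y1 = y2].
Proof.
move=> z1 z2 h1 h2.
have [e1|e1] := idx_half z1 h1.
  by apply: Or31; rewrite -(iter_findex z1) e1.
have [e2|e2] := idx_half z2 h2.
  by apply: Or32; rewrite -(iter_findex z2) e2.
apply: Or33; rewrite -(iter_findex z1) -(iter_findex z2).
have -> : findex ff z y1 = findex ff z y2.
  by lia.
by [].
Qed.

End Orbit.

Definition S z e :=
  [&& e \in F, (c e == a) || (c e == x) & fconnect ff z (src e, c e == a)].
Definition sw t := if t == a then x else a.
Definition cs z := [ffun e => if S z e then sw (c e) else c e].

Lemma sw_ax t : (sw t == a) || (sw t == x).
Proof. by rewrite /sw; case: ifP; rewrite eqxx ?orbT. Qed.

Lemma xa_false : (x == a) = false.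
Proof. by rewrite eq_sym (negbTE Hax). Qed.

Lemma ax_flip t1 t2 : (t1 == a) || (t1 == x) -> (t2 == a) || (t2 == x) ->
  t1 != t2 -> (t2 == a) = ~~ (t1 == a).
Proof.
by move=> /orP[]/eqP-> /orP[]/eqP->; rewrite ?eqxx ?xa_false.
Qed.

Lemma sw_inj t1 t2 : (t1 == a) || (t1 == x) -> (t2 == a) || (t2 == x) ->
  t1 != t2 -> sw t1 != sw t2.
Proof.
by move=> /orP[]/eqP-> /orP[]/eqP->; rewrite /sw ?eqxx ?xa_false // eq_sym.
Qed.

Lemma hh_src e : e \in F -> (c e == a) || (c e == x) ->
  hh (src e, c e == a) = (dst e, c e == a).
Proof.
move=> eF cax; rewrite /hh /=.
have -> : col (c e == a) = c e.
  rewrite /col; case: eqP => [->//|ne].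
  by case/orP: cax => /eqP // ce; case: ne.
by rewrite (sig_edge eF (_ : inc e (src e)) (erefl _)) /oth ?eqxx // incE eqxx.
Qed.

Lemma key z e v : hh z = z -> e \in F -> (c e == a) || (c e == x) -> inc e v ->
  fconnect ff z (v, c e == a) = fconnect ff z (src e, c e == a).
Proof.
move=> Hz eF cax; rewrite incE => /orP[/eqP<- //|/eqP<-].
apply/idP/idP => H.
- by rewrite -(hhK (src e, _)) hh_src //; apply: O_hh.
- by rewrite -hh_src //; apply: O_hh.
Qed.

Lemma cs_proper z : hh z = z -> proper F (cs z).
Proof.
move=> Hz e f eF fF nef aef; rewrite !ffunE.
have Hc := Hp eF fF nef aef.
case/adjP: (aef) => v [ev fv].
have Sv g : g \in F -> inc g v ->
    S z g = ((c g == a) || (c g == x)) && fconnect ff z (v, c g == a).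
  move=> gF gv; rewrite /S gF /=; case cax: (_ || _) => //=.
  by rewrite (key Hz gF cax gv).
have mixed g1 g2 : g1 \in F -> g2 \in F -> inc g1 v -> inc g2 v ->
    c g1 != c g2 -> S z g1 -> ~~ S z g2 -> sw (c g1) != c g2.
  move=> g1F g2F i1 i2 c12; rewrite Sv // => /andP[ca1 O1] S2.
  case ca2: ((c g2 == a) || (c g2 == x)).
    exfalso; move/negP: S2; apply; rewrite Sv // ca2 /=.
    by rewrite (ax_flip ca1 ca2 c12); apply: (O_kk Hz O1).
  by apply/negP => /eqP E'; move: ca2; rewrite -E' sw_ax.
case Se: (S z e); case Sf: (S z f) => //.
- apply: sw_inj => //.
  + by move: Se => /and3P[].
  + by move: Sf => /and3P[].
- by apply: (mixed e f) => //; rewrite Sf.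
- by rewrite eq_sym; apply: (mixed f e) => //; rewrite ?Se // eq_sym.
Qed.

Lemma cs_miss1 v : ~~ present F c v x -> ~~ present F (cs (v, false)) v a.
Proof.
move=> nx; apply/negP => /existsP[e /and3P[eF ev /eqP ce]].
have Hz : hh (v, false) = (v, false) by rewrite /hh /= /col sig_none.
move: ce; rewrite ffunE; case Se: (S _ e) => ce.
- move: Se => /and3P[_ cax _].
  have cex : c e = x.
    move: ce cax; rewrite /sw; case: eqP => [->|_]; first by move/eqP; rewrite xa_false.
    by move=> _ /= /eqP.
  by move/negP: nx; apply; apply/existsP; exists e; rewrite eF ev cex eqxx.
- have cax : (c e == a) || (c e == x) by rewrite ce eqxx.
  move: Se; rewrite /S eF cax -(key Hz eF cax ev) ce eqxx /=.
  have := O_kk Hz (connect0 _ (v, false)); rewrite /kk /= => ->.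
  by [].
Qed.

Lemma cs_miss2 z w : hh z = z -> ~~ present F c w a ->
  ~~ fconnect ff z (w, true) -> ~~ present F (cs z) w a.
Proof.
move=> Hz na nO; apply/negP => /existsP[e /and3P[eF ew /eqP ce]].
move: ce; rewrite ffunE; case Se: (S _ e) => ce.
- move: Se => /and3P[_ cax Oe].
  have cex : c e = x.
    move: ce cax; rewrite /sw; case: eqP => [->|_]; first by move/eqP; rewrite xa_false.
    by move=> _ /= /eqP.
  move: Oe; rewrite -(key Hz eF cax ew) cex xa_false => Oe.
  by move/negP: nO; apply; have := O_kk Hz Oe.
- by move/negP: na; apply; apply/existsP; exists e; rewrite eF ew ce eqxx.
Qed.

End Kempe.

Lemma two_others (y : 'I_3) : exists a b : 'I_3, [/\ a != y, b != y & a != b].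
Proof.
case: y => [[|[|[|m]]] Hm] //.
- by exists c1, c2.
- by exists c0, c2.
- by exists c0, c1.
Qed.

Lemma lemA F c u e1 e2 : optimal F c -> inc e1 u -> inc e2 u ->
  e1 \notin F -> e2 \notin F -> e1 = e2.
Proof.
move=> Ho i1 i2 n1 n2; apply/eqP/negPn/negP => n12.
have [Hp Hmax] := Ho.
have [s1 m1] := @miss_exists _ c _ _ n1 (oth_inc e1 u).
have [s2 m2] := @miss_exists _ c _ _ n2 (oth_inc e2 u).
have p1 : present F c u s1.
  case: (boolP (present F c u s1)) => // np; exfalso; exact: (opt_add' Ho n1 i1 np m1).
have p2 : present F c u s2.
  case: (boolP (present F c u s2)) => // np; exfalso; exact: (opt_add' Ho n2 i2 np m2).
have onec := one_color (c := c) n1 n2 n12 i1 i2.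
have s21 : s2 = s1 := onec _ _ p2 p1.
rewrite s21 in m2.
have na t : t != s1 -> ~~ present F c u t.
  by move=> ts; apply/negP => pt; move/eqP: ts; apply; apply: onec.
have [a [b [as1 bs1 ab]]] := two_others s1.
have v12 : oth e1 u != oth e2 u.
  apply/negP => /eqP E12.
  have j2 : inc e2 (oth e1 u) by rewrite E12 oth_inc.
  have j1 := oth_inc e1 u.
  case: (boolP (present F c (oth e1 u) a)) => pa.
  - case: (boolP (present F c (oth e1 u) b)) => pb.
      by move/eqP: ab; apply; apply: (one_color n1 n2 n12 j1 j2 pa pb).
    exact: (opt_add' Ho n1 i1 (na b bs1) pb).
  - exact: (opt_add' Ho n1 i1 (na a as1) pa).
have Hzu : hh F c a s1 (u, true) = (u, true).
  by rewrite /hh /= /col sig_none // na.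
have conn g : g \notin F -> inc g u -> ~~ present F c (oth g u) s1 ->
    fconnect (ff F c a s1) (u, true) (oth g u, false).
  move=> gF gu ms; rewrite fconnect_sym; last exact: ff_inj.
  apply/negPn/negP => nO.
  have Hz : hh F c a s1 (oth g u, false) = (oth g u, false).
    by rewrite /hh /= /col sig_none.
  have Hp' := cs_proper Hp as1 Hz.
  have ma1 := cs_miss1 Hp as1 ms.
  have ma2 := cs_miss2 Hp as1 Hz (na a as1) nO.
  exact: (opt_add' (conj Hp' Hmax) gF gu ma2 ma1).
have C1 := conn _ n1 i1 m1.
have C2 := conn _ n2 i2 m2.
have h1 : hh F c a s1 (oth e1 u, false) = (oth e1 u, false).
  by rewrite /hh /= /col sig_none.
have h2 : hh F c a s1 (oth e2 u, false) = (oth e2 u, false).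
  by rewrite /hh /= /col sig_none.
case: (ends2 Hp as1 Hzu C1 C2 h1 h2) => // -[E12].
by move/eqP: v12.
Qed.

Lemma rot_opt F c g b h : optimal F c -> g \notin F -> ~~ present F c (dst g) b ->
  h \in F -> inc h (src g) -> c h = b ->
  optimal (g |: (F :\ h)) [ffun e => if e == g then b else c e].
Proof.
move=> [Hp Hmax] gF np hF hx ch; split.
- apply: add_proper.
  + exact: proper_sub (subsetDl F [set h]) Hp.
  + by rewrite !inE (negbTE gF) andbF.
  + move=> e; rewrite !inE => /andP[neh eF] /adjP[v [gv ev]]; apply/eqP => ceb.
    move: gv; rewrite incE => /orP[]/eqP vE.
    * move/eqP: neh; apply; apply: (uniq_col Hp eF hF _ hx); first by rewrite vE.
      by rewrite ceb ch.
    * by move/negP: np; apply; apply/existsP; exists e; rewrite eF vE ev ceb eqxx.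
- have cF : #|g |: (F :\ h)| = #|F|.
    by rewrite cardsU1 (cardsD1 h F) hF !inE (negbTE gF) andbF.
  by move=> F' /Hmax; rewrite cF.
Qed.

Lemma lemB F c g b h : optimal F c -> g \notin F -> ~~ present F c (dst g) b ->
  h \in F -> inc h (src g) -> c h = b ->
  forall g', inc g' (oth h (src g)) -> g' \in F.
Proof.
move=> Ho gF np hF hx ch g' ig'.
case: (boolP (g' \in F)) => // g'F; exfalso.
have Ho' := rot_opt Ho gF np hF hx ch.
have hn : h \notin g |: (F :\ h).
  rewrite !inE negb_or negb_and eqxx /= andbT; exact: (neq_in hF gF).
have g'n : g' \notin g |: (F :\ h).
  rewrite !inE negb_or negb_and g'F orbT andbT.
  apply/eqP => E'; move: ig'; rewrite E' incE => /orP[]/eqP Ew.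
  - by move: (oth_neq hx); rewrite -Ew eqxx.
  - move/negP: np; apply; apply/existsP; exists h.
    by rewrite hF Ew oth_inc ch eqxx.
have := lemA Ho' (oth_inc h (src g)) ig' hn g'n => Eh.
by move: hF; rewrite Eh (negbTE g'F).
Qed.

Definition beta F c g := odflt c0 [pick s | ~~ present F c (dst g) s].
Definition hedge F c g := [pick h | [&& h \in F, inc h (src g) & c h == beta F c g]].
Definition phi F c g := if hedge F c g is Some h then oth h (src g) else src g.

Lemma phi_spec F c g : optimal F c -> g \notin F ->
  exists b h, [/\ ~~ present F c (dst g) b, h \in F, inc h (src g), c h = b
              & phi F c g = oth h (src g)].
Proof.
move=> Ho gF.
have mb : ~~ present F c (dst g) (beta F c g).
  rewrite /beta; case: pickP => [s //|H].
  have gd : inc g (dst g) by rewrite incE eqxx orbT.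
  have [s ms] := @miss_exists _ c _ _ gF gd.
  by have := H s; rewrite /= ms.
rewrite /phi /hedge; case: pickP => [h /and3P[hF hx /eqP ch]|H].
  by exists (beta F c g), h.
exfalso; case: (boolP (present F c (src g) (beta F c g))) => [|ms].
  by case/existsP => h Hh; have := H h; rewrite Hh.
exact: (opt_add Ho gF ms mb).
Qed.

Lemma phi_full F c g : optimal F c -> g \notin F ->
  forall g', inc g' (phi F c g) -> g' \in F.
Proof.
move=> Ho gF; have [b [h [mb hF hx ch ->]]] := phi_spec Ho gF.
exact: lemB Ho gF mb hF hx ch.
Qed.

Lemma phi_inj F c g1 g2 : optimal F c -> g1 \notin F -> g2 \notin F ->
  phi F c g1 = phi F c g2 -> g1 = g2.
Proof.
move=> Ho n1 n2.
have [b1 [h1 [m1 h1F i1 c1 ->]]] := phi_spec Ho n1.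
have [b2 [h2 [m2 h2F i2 c2 ->]]] := phi_spec Ho n2 => Ew.
have [Hp _] := Ho.
apply/eqP/negPn/negP => n12.
case: (eqVneq b1 b2) => [Eb|nb].
- have Eh : h1 = h2.
    apply: (uniq_col Hp h1F h2F (oth_inc h1 (src g1))); first by rewrite Ew oth_inc.
    by rewrite c1 c2 Eb.
  have Es : src g1 = src g2.
    by rewrite -(oth_oth i1) Ew Eh (oth_oth i2).
  have j1 : inc g1 (src g1) by rewrite incE eqxx.
  have j2 : inc g2 (src g1) by rewrite Es incE eqxx.
  by move/eqP: n12; apply; apply: (lemA Ho j1 j2 n1 n2).
- have Ho' := rot_opt Ho n1 m1 h1F i1 c1.
  have g2n : g2 \notin g1 |: (F :\ h1).
    by rewrite !inE negb_or eq_sym n12 negb_and n2 orbT.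
  have m2' : ~~ present (g1 |: (F :\ h1)) [ffun e => if e == g1 then b1 else c e]
      (dst g2) b2.
    apply/negP => /existsP[e /and3P[eF ed /eqP ce]].
    move: eF ce; rewrite !inE ffunE => /predU1P[->|/andP[_ eF]]; rewrite ?eqxx.
      by move=> E'; move/eqP: nb.
    rewrite (negbTE (neq_in eF n1)) => ce.
    by move/negP: m2; apply; apply/existsP; exists e; rewrite eF ed ce eqxx.
  have h2F' : h2 \in g1 |: (F :\ h1).
    rewrite !inE h2F andbT orbC; apply/orP; left.
    by apply: (@neq_col c); rewrite c1 c2 eq_sym.
  have c2' : [ffun e => if e == g1 then b1 else c e] h2 = b2.
    by rewrite ffunE (negbTE (neq_in h2F n1)).
  have := lemB Ho' g2n m2' h2F' i2 c2' (_ : inc h1 _); rewrite -Ew oth_inc => /(_ isT).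
  by rewrite !inE eqxx andFb orbF; apply/negP; exact: (neq_in h1F n1).
Qed.

Lemma sum_eq1 (a : V) : \sum_(v : V) (a == v : nat) = 1.
Proof.
rewrite (bigD1 a) //= eqxx big1 // => v; rewrite eq_sym => /negbTE->.
by [].
Qed.

Lemma double_count (A : {set E}) :
  \sum_(v : V) #|[set e in A | inc e v]| = 2 * #|A|.
Proof.
have H1 v : #|[set e in A | inc e v]| = \sum_(e in A) (inc e v : nat).
  rewrite -sum1_card big_mkcond [RHS]big_mkcond /=; apply: eq_bigr => e _.
  by rewrite !inE; case: (e \in A); case: (inc e v).
under eq_bigr do rewrite H1.
rewrite exchange_big /= -[RHS]mulnC -sum_nat_const; apply: eq_bigr => e _.
have -> : \sum_(v : V) (inc e v : nat) = \sum_(v : V) ((src e == v) + (dst e == v)).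
  apply: eq_bigr => v _; rewrite incE.
  case: (eqVneq (src e) v) => [<-|] /=.
    by rewrite eq_sym (negbTE (Hloop e)).
  by case: (dst e == v).
by rewrite big_split /= !sum_eq1.
Qed.

Theorem main : 7 * #|V| <= 6 * nu src dst 3.
Proof.
have col0 : k_edge_colorable src dst 3 set0.
  by apply/colorableP; exists [ffun=> c0] => e f; rewrite inE.
have [F Fcol Fmax] : exists2 F, k_edge_colorable src dst 3 F & nu src dst 3 = #|F|.
  have gt0 : 0 < #|k_edge_colorable src dst 3|.
    by apply/card_gt0P; exists set0.
  case: (@eq_bigmax_cond _ (k_edge_colorable src dst 3) (fun F => #|F|) gt0).
  by move=> F0 H0 E0; exists F0.
case/colorableP: (Fcol) => c Hp.
have Ho : optimal F c.
  split => // F' H; rewrite -Fmax.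
  exact: (@leq_bigmax_cond _ (k_edge_colorable src dst 3) (fun F => #|F|) F' H).
set N := [set v | [exists e, (e \notin F) && inc e v]].
have hN : #|N| = 2 * #|~: F|.
  rewrite -double_count -sum1_card big_mkcond /=; apply: eq_bigr => v _.
  case: ifP => [vN|nN].
    move: vN; rewrite /N inE => /existsP[e0 /andP[e0F ev]].
    suff -> : [set e in ~: F | inc e v] = [set e0] by rewrite cards1.
    apply/setP => e; rewrite !inE; apply/andP/eqP => [[eF ev']|->].
      exact: (lemA Ho ev' ev).
    by [].
  suff -> : [set e in ~: F | inc e v] = set0 by rewrite cards0.
  apply/setP => e; rewrite !inE; apply/negP => /andP[eF ev].
  move/negbT: nN; rewrite /N inE => /negP; apply.
  by apply/existsP; exists e; rewrite eF.
have hdeg : 2 * #|E| = 3 * #|V|.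
  rewrite -cardsT -double_count.
  have -> : \sum_(v : V) #|[set e in [set: E] | inc e v]| = \sum_(v : V) 3.
    apply: eq_bigr => v _; rewrite -(Hcub v) /deg; apply: eq_card => e.
    by rewrite !inE.
  by rewrite sum_nat_const mulnC.
have hphi : #|~: F| <= #|~: N|.
  have inj : {in ~: F &, injective (phi F c)}.
    move=> g1 g2; rewrite !inE => n1 n2; exact: phi_inj Ho n1 n2.
  rewrite -(card_in_imset inj); apply: subset_leq_card; apply/subsetP => w.
  case/imsetP => g; rewrite inE => gF ->; rewrite !inE; apply/negP.
  case/existsP => e /andP[eF ew].
  by move/negP: eF; apply; exact: (phi_full Ho gF ew).
have cN := cardsC N.
have cF := cardsC F.
rewrite Fmax; lia.
Qed.

End Proof.

Theorem theorem3 (V E : finType) (src dst : E -> V) :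
  loopless src dst -> cubic src dst ->
  7 * #|V| <= 6 * nu src dst 3.
Proof. move=> Hl Hc; exact: main Hl Hc. Qed.
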